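(* Let $M$ be a matroid on $[n]$ and $\preceq$ a term order on $\mathbb{R}[x_1,\dots,x_n]$. Then $\mathcal{S}_\preceq(M)$ is a subcomplex of the independence complex $\mathcal{I}(M)$ of $M$.
   Context: $V_M=\{\mathbf{e}_B:B \text{ a basis of } M\}\subseteq\{0,1\}^n$ ($\mathbf{e}_B$ the characteristic vector). $\mathcal{S}_\preceq(M)=\{\tau\subseteq[n]:\prod_{i\in\tau}x_i\notin\mathrm{in}_\preceq(I(V_M))\}$, where $I(V_M)$ is the vanishing ideal of $V_M$ and $\mathrm{in}_\preceq$ the initial ideal. $\mathcal{I}(M)$ is the simplicial complex of independent sets of $M$. *)

(* Defs.v *)
From HB Require Import structures.
From mathcomp Require Import all_boot all_order all_algebra.
From mathcomp Require Import reals.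
From mathcomp Require Import mpoly.
Set Implicit Arguments. Unset Strict Implicit. Unset Printing Implicit Defensive.
Import GRing.Theory.
Local Open Scope ring_scope.

Definition is_matroid_bases (n : nat) (bases : {set {set 'I_n}}) : Prop :=
  bases != set0 /\
  forall B1 B2, B1 \in bases -> B2 \in bases ->
    forall x, x \in B1 :\: B2 ->
      exists2 y, y \in B2 :\: B1 & (B1 :\ x) :|: [set y] \in bases.

Definition indep_complex (n : nat) (bases : {set {set 'I_n}}) : {set {set 'I_n}} :=
  [set I : {set 'I_n} | [exists B in bases, I \subset B]].

Definition term_order (n : nat) (le : rel 'X_{1..n}) : Prop :=
  reflexive le /\ antisymmetric le /\ transitive le /\ total le /\
  (forall m1 m2 m3, le m1 m2 -> le (mnm_add m1 m3) (mnm_add m2 m3)) /\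
  (forall m, le (@mnm0 n) m).

(* V_M = { e_B : B basis } ; characteristic vector e_B. *)
Definition char_vec (R : realType) (n : nat) (B : {set 'I_n}) : 'I_n -> R :=
  fun i => (i \in B)%:R.

Definition vanishing_ideal (R : realType) (n : nat) (bases : {set {set 'I_n}})
  (p : {mpoly R[n]}) : Prop :=
  forall B, B \in bases -> p.@[char_vec R B] = 0.

Definition is_lead_mon (R : realType) (n : nat) (le : rel 'X_{1..n})
  (p : {mpoly R[n]}) (m : 'X_{1..n}) : Prop :=
  m \in msupp p /\ forall m', m' \in msupp p -> le m' m.

Definition initial_ideal (R : realType) (n : nat) (le : rel 'X_{1..n})
  (I : {mpoly R[n]} -> Prop) (q : {mpoly R[n]}) : Prop :=
  exists s : seq ({mpoly R[n]} * {mpoly R[n]} * 'X_{1..n}),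
    (forall t, t \in s -> [/\ I t.1.2, t.1.2 != 0 & is_lead_mon le t.1.2 t.2]) /\
    q = \sum_(t <- s) t.1.1 * 'X_[t.2].

Definition standard_complex (R : realType) (n : nat) (le : rel 'X_{1..n})
  (bases : {set {set 'I_n}}) (tau : {set 'I_n}) : Prop :=
  ~ initial_ideal le (@vanishing_ideal R n bases) (\prod_(i in tau) 'X_i).

Definition is_subcomplex (n : nat) (S : {set 'I_n} -> Prop) (K : {set {set 'I_n}}) : Prop :=
  (forall sigma tau : {set 'I_n}, tau \subset sigma -> S sigma -> S tau) /\
  (forall tau, S tau -> tau \in K).

(* Main.v *)
Require Import Defs.
From HB Require Import structures.
From mathcomp Require Import all_boot all_order all_algebra.
From mathcomp Require Import reals.
From mathcomp Require Import mpoly.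
Import GRing.Theory.
Local Open Scope ring_scope.

Theorem corollary2p5 (R : realType) (n : nat) (bases : {set {set 'I_n}})
  (le : rel 'X_{1..n}) :
  is_matroid_bases bases -> term_order le ->
  is_subcomplex (@standard_complex R n le bases) (indep_complex bases).
Proof.
move=> _ [lerefl _]; split.
  move=> sigma tau sub Hs Ht; apply: Hs.
  case: Ht => s [Hs' Heq].
  set r : {mpoly R[n]} := \prod_(i in sigma :\: tau) 'X_i.
  have -> : \prod_(i in sigma) 'X_i = (\prod_(i in tau) 'X_i) * r :> {mpoly R[n]}.
    rewrite /r (big_setID tau) /=; congr (_ * _).
    by apply: eq_bigl => i; rewrite in_setI andbC; case: (boolP (i \in tau)) => // /(subsetP sub) ->.
  exists [seq (t.1.1 * r, t.1.2, t.2) | t <- s]; split.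
    by move=> t /mapP [u Hu ->] /=; apply: Hs'.
  by rewrite Heq big_map mulr_suml; apply: eq_bigr => t _ /=; rewrite mulrAC.
move=> tau Ht; rewrite inE; case: (boolP [exists B in bases, tau \subset B]) => // Hn; exfalso; apply: Ht.
set p : {mpoly R[n]} := \prod_(i in tau) 'X_i.
pose m : 'X_{1..n} := (\sum_(i in tau) mnm1 i)%MM.
have pE : p = 'X_[m] by rewrite /p /m mprodXE.
exists [:: (1, p, m)]; split.
  move=> t; rewrite inE => /eqP -> /=; split.
  - move=> B HB; rewrite /p rmorph_prod /=.
    have [i /andP [it iB]] : exists i, (i \in tau) && (i \notin B).
      apply/existsP; apply: contraNT Hn; rewrite negb_exists => /forallP H.
      apply/existsP; exists B; rewrite HB /=; apply/subsetP => i it.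
      by move: (H i); rewrite it /= negbK.
    rewrite (bigD1 i) //= mevalXU /char_vec (negbTE iB) mul0r //.
  - by apply/eqP => H; have := msuppX R m; rewrite -pE H msupp0.
  - by rewrite /is_lead_mon pE msuppX; split; [rewrite inE | move=> m'; rewrite inE => /eqP ->].
by rewrite big_seq1 /= mul1r pE.
Qed.
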